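(* Let $F\neq\mathbb{C}$ be a local field of characteristic zero, with uniformizer $\varpi$ when $F$ is non-archimedean. For $\phi\in\mathcal{S}(F^2)$ define, for $a\in F^\times$, $$H(a)=\begin{cases}\sum_{b\in\mathbb{Z}}|\phi(a\varpi^b,\varpi^{-b})|, & F\ne\mathbb{R},\\ \int_{\mathbb{R}_+^\times}|\phi(at,t^{-1})|\,d^\times t, & F=\mathbb{R}.\end{cases}$$ Then there exist a finite index set $I$, Schwartz functions $A_i,B_i\in\mathcal{S}(F)$ ($i\in I$) and a constant $C>0$, depending on $\phi$, such that for all $a\in F^\times$ $$H(a)\le\sum_{i\in I}|A_i(a)|+\big|\log|a|\big|\sum_{i\in I}|B_i(a)|+C.$$ *)

(* Defs.v *)
From Stdlib Require Import Reals.
From Coquelicot Require Import Coquelicot.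
From mathcomp Require Import all_boot all_algebra.
Open Scope R_scope.

Definition schwartzR (f : R -> R) : Prop :=
  (forall (k : nat) (x : R), ex_derive_n f k x) /\
  (forall (k m : nat), exists M : R, forall x : R, Rabs (x ^ m * Derive_n f k x) <= M).

Definition schwartzC (f : R -> C) : Prop :=
  schwartzR (fun x => Re (f x)) /\ schwartzR (fun x => Im (f x)).

(* Iterated partial derivatives of f : R -> R -> R along a word
   (true = d/dx, false = d/dy; the head letter is applied last). *)
Fixpoint pderiv (w : list bool) (f : R -> R -> R) : R -> R -> R :=
  match w with
  | nil => f
  | b :: w' =>
      let g := pderiv w' f in
      if b then fun x y => Derive (fun t => g t y) x
           else fun x y => Derive (fun t => g x t) y
  end.

Definition smooth2 (f : R -> R -> R) : Prop :=
  forall (w : list bool) (x y : R),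
    ex_derive (fun t => pderiv w f t y) x /\
    ex_derive (fun t => pderiv w f x t) y /\
    filterlim (fun p : R * R => pderiv w f (fst p) (snd p))
              (locally (x, y)) (locally (pderiv w f x y)).

Definition schwartzR2 (f : R -> R -> R) : Prop :=
  smooth2 f /\
  (forall (w : list bool) (m n : nat), exists M : R,
     forall x y : R, Rabs (x ^ m * y ^ n * pderiv w f x y) <= M).

Definition schwartzC2 (f : R -> R -> C) : Prop :=
  schwartzR2 (fun x y => Re (f x y)) /\ schwartzR2 (fun x y => Im (f x y)).

(* H(a) = int_{R_+^x} |phi(a t, t^{-1})| d^x t,  d^x t = dt / t. *)
Definition H_real (phi : R -> R -> C) (a : R) : R :=
  RInt_gen (fun t => Cmod (phi (a * t) (/ t)) / t)
           (at_right 0) (Rbar_locally p_infty).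

Section NA.
Variable F : fieldType.
Variable abs : F -> R.

Definition dist (x y : F) : R := abs (GRing.add x (GRing.opp y)).

Definition is_uniformizer (w : F) : Prop :=
  0 < abs w < 1 /\
  forall x : F, x <> (@GRing.zero F) -> exists k : Z, abs x = powerRZ (abs w) k.

(* F is a non-archimedean local field with (an) absolute value abs:
   abs is a non-trivial discrete ultrametric absolute value, F is complete,
   and the residue field O/m is finite. *)
Definition is_na_local_field : Prop :=
  (forall x, 0 <= abs x) /\
  (forall x, abs x = 0 <-> x = (@GRing.zero F)) /\
  (forall x y, abs (GRing.mul x y) = abs x * abs y) /\
  (forall x y, abs (GRing.add x y) <= Rmax (abs x) (abs y)) /\
  (exists w, is_uniformizer w) /\
  (forall u : nat -> F,
     (forall eps, 0 < eps -> exists N : nat, forall m n : nat,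
        (N <= m)%nat -> (N <= n)%nat -> dist (u m) (u n) < eps) ->
     exists l : F, forall eps, 0 < eps -> exists N : nat, forall n : nat,
        (N <= n)%nat -> dist (u n) l < eps) /\
  (exists s : list F, (forall r, List.In r s -> abs r <= 1) /\
     forall x, abs x <= 1 -> exists r, List.In r s /\ dist x r < 1).

Definition char_zero : Prop :=
  forall n : nat, (0 < n)%N -> GRing.natmul ((@GRing.one F)) n <> (@GRing.zero F).

Definition schwartzF (f : F -> C) : Prop :=
  (forall x, exists r, 0 < r /\ forall y, dist x y < r -> f y = f x) /\
  (exists R0 : R, forall x, R0 < abs x -> f x = 0%C).

Definition schwartzF2 (f : F -> F -> C) : Prop :=
  (forall x1 x2, exists r, 0 < r /\ forall y1 y2,
      Rmax (dist x1 y1) (dist x2 y2) < r -> f y1 y2 = f x1 x2) /\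
  (exists R0 : R, forall x1 x2, R0 < Rmax (abs x1) (abs x2) -> f x1 x2 = 0%C).

(* H(a) = sum_{b in Z} |phi(a w^b, w^{-b})|, split as b >= 0 and b = -(n+1). *)
Definition H_na (w : F) (phi : F -> F -> C) (a : F) : R :=
  Series (fun n : nat =>
    Cmod (phi (GRing.mul a (GRing.exp w n)) (GRing.inv (GRing.exp w n)))) +
  Series (fun n : nat =>
    Cmod (phi (GRing.mul a (GRing.inv (GRing.exp w n.+1))) (GRing.exp w n.+1))).
End NA.
Arguments dist {F}.
Arguments is_uniformizer {F}.
Arguments is_na_local_field {F}.
Arguments schwartzF {F}.
Arguments schwartzF2 {F}.
Arguments H_na {F}.

(* Main.v *)
Require Import Defs.
From Stdlib Require Import Reals Lra Lia Psatz FunctionalExtensionality Classical ClassicalEpsilon.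
From Coquelicot Require Import Coquelicot.
From mathcomp Require Import all_boot all_algebra zify.
Open Scope R_scope.
Inductive PE : (R -> R) -> Prop :=
| PE_base : PE (fun x => exp (- (x * x)))
| PE_mulx f : PE f -> PE (fun x => x * f x)
| PE_add f g : PE f -> PE g -> PE (fun x => f x + g x)
| PE_scal c f : PE f -> PE (fun x => c * f x).

Lemma PE_deriv f : PE f -> exists f', PE f' /\ forall x, is_derive f x (f' x).
Proof.
induction 1 as [|f Hf [f' [Hf' Df]]|f g Hf [f' [Hf' Df]] Hg [g' [Hg' Dg]]|c f Hf [f' [Hf' Df]]].
- exists (fun x => -2 * (x * exp (- (x * x)))). split.
  + apply PE_scal, PE_mulx, PE_base.
  + intros x. auto_derive; [trivial| ring].
- exists (fun x => f x + x * f' x). split.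
  + apply PE_add; [exact Hf| apply PE_mulx; exact Hf'].
  + intros x. eapply is_derive_ext; [intros t; reflexivity|].
    have H := is_derive_mult (fun t => t) f x 1 (f' x) (is_derive_id x) (Df x) Rmult_comm.
    eapply is_derive_ext; [|eapply filterdiff_ext_lin; [exact H|]]; simpl.
    * intros t; reflexivity.
    * intros y. unfold scal, mult, plus; simpl. unfold mult; simpl. ring.
- exists (fun x => f' x + g' x). split; [apply PE_add; assumption|].
  intros x. exact (is_derive_plus f g x _ _ (Df x) (Dg x)).
- exists (fun x => c * f' x). split; [apply PE_scal; assumption|].
  intros x. exact (is_derive_scal f x c _ (Df x)).
Qed.

Lemma PE_Derive_n f : PE f -> forall k, exists g, PE g /\ Derive_n f k = g /\
  (forall x, ex_derive_n f k x).
Proof.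
intros Hf k. induction k as [|k [g [Hg [Eg Ex]]]].
- exists f. repeat split; auto.
- destruct (PE_deriv g Hg) as [g' [Hg' Dg]].
  exists g'. split; [exact Hg'|]. split.
  + apply functional_extensionality; intros x. simpl. rewrite Eg.
    apply is_derive_unique, Dg.
  + intros x. simpl. rewrite Eg. eexists; apply Dg.
Qed.

Lemma exp_pow_mult (a : R) (n : nat) : exp a ^ n = exp (INR n * a).
Proof.
induction n as [|n IH]; simpl.
- rewrite Rmult_0_l exp_0; reflexivity.
- rewrite IH -exp_plus. f_equal. destruct n; simpl; ring.
Qed.

Lemma gauss_bound (m : nat) (x : R) : Rabs (x ^ m * exp (- (x * x))) <= INR m ^ m.
Proof.
destruct m as [|m].
- simpl. rewrite Rmult_1_l Rabs_pos_eq; [|left; apply exp_pos].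
  rewrite <- exp_0. apply exp_le_3 || idtac.
  destruct (Req_dec x 0) as [->|Hx].
  + rewrite Rmult_0_l Ropp_0; lra.
  + left. apply exp_increasing. have := Rsqr_pos_lt x Hx. unfold Rsqr. lra.
- set (n := S m). have Hn : 1 <= INR n by (unfold n; rewrite S_INR; have := pos_INR m; lra).
  rewrite Rabs_mult (Rabs_pos_eq (exp _)); [|left; apply exp_pos].
  rewrite <- RPow_abs.
  have H1 : Rabs x <= 1 + x * x.
  { destruct (Rle_dec 0 x); [rewrite Rabs_pos_eq; nra| rewrite Rabs_left; nra]. }
  have H2 : 1 + x * x <= INR n * exp (x * x / INR n).
  { have := exp_ineq1_le (x * x / INR n).
    intros H. have Hxx : 0 <= x * x by nra.
    apply Rle_trans with (INR n * (1 + x * x / INR n)).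
    - replace (INR n * (1 + x * x / INR n)) with (INR n + x * x) by (field; lra). lra.
    - apply Rmult_le_compat_l; lra. }
  have H3 : Rabs x ^ n <= (INR n * exp (x * x / INR n)) ^ n.
  { apply pow_incr. split; [apply Rabs_pos| lra]. }
  rewrite Rpow_mult_distr exp_pow_mult in H3.
  replace (INR n * (x * x / INR n)) with (x * x) in H3 by (field; lra).
  apply Rle_trans with (INR n ^ n * exp (x * x) * exp (- (x * x))).
  + apply Rmult_le_compat_r; [left; apply exp_pos| exact H3].
  + rewrite Rmult_assoc -exp_plus Rplus_opp_r exp_0 Rmult_1_r; lra.
Qed.

Lemma PE_bound f : PE f -> forall m, exists M, forall x, Rabs (x ^ m * f x) <= M.
Proof.
induction 1 as [|f Hf IH|f g Hf IHf Hg IHg|c f Hf IH]; intros m.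
- exists (INR m ^ m). apply gauss_bound.
- destruct (IH (S m)) as [M HM]. exists M. intros x.
  replace (x ^ m * (x * f x)) with (x ^ S m * f x) by (simpl; ring). apply HM.
- destruct (IHf m) as [M1 H1]; destruct (IHg m) as [M2 H2]. exists (M1 + M2).
  intros x. rewrite Rmult_plus_distr_l. eapply Rle_trans; [apply Rabs_triang|].
  apply Rplus_le_compat; auto.
- destruct (IH m) as [M HM]. exists (Rabs c * M). intros x.
  replace (x ^ m * (c * f x)) with (c * (x ^ m * f x)) by ring.
  rewrite Rabs_mult. apply Rmult_le_compat_l; [apply Rabs_pos| apply HM].
Qed.

Lemma PE_schwartz f : PE f -> schwartzR f.
Proof.
intros Hf. split.
- intros k x. destruct (PE_Derive_n f Hf k) as [g [_ [_ H]]]. apply H.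
- intros k m. destruct (PE_Derive_n f Hf k) as [g [Hg [Eg _]]]. rewrite Eg.
  apply PE_bound, Hg.
Qed.

Lemma schwartzC_gauss (c : R) : schwartzC (fun x => RtoC (c * exp (- (x * x)))).
Proof.
split; simpl.
- apply PE_schwartz, PE_scal, PE_base.
- have H : PE (fun x => 0 * exp (- (x * x))) by apply PE_scal, PE_base.
  have E : (fun x => 0 * exp (- (x * x))) = (fun _ => 0) by apply functional_extensionality; intros; ring.
  rewrite E in H. exact (PE_schwartz _ H).
Qed.
Lemma R2_bound f : schwartzR2 f -> exists K, forall x y,
  Rabs (f x y) * ((1 + x * x) * (1 + y * y)) <= K.
Proof.
intros [_ H].
destruct (H nil 0%nat 0%nat) as [M1 H1]. destruct (H nil 2%nat 0%nat) as [M2 H2].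
destruct (H nil 0%nat 2%nat) as [M3 H3]. destruct (H nil 2%nat 2%nat) as [M4 H4].
exists (M1 + M2 + M3 + M4). intros x y.
specialize (H1 x y); specialize (H2 x y); specialize (H3 x y); specialize (H4 x y).
simpl in H1, H2, H3, H4.
rewrite !Rabs_mult in H1, H2, H3, H4.
rewrite !Rabs_R1 !Rmult_1_r !Rmult_1_l in H1, H2, H3, H4.
have Ex : Rabs x * Rabs x = x * x by (rewrite -Rabs_mult; apply Rabs_pos_eq; nra).
have Ey : Rabs y * Rabs y = y * y by (rewrite -Rabs_mult; apply Rabs_pos_eq; nra).
rewrite Ex in H2. rewrite Ey in H3.
replace (Rabs x * Rabs x * (Rabs y * Rabs y)) with (x * x * (y * y)) in H4 by (rewrite Ex Ey; ring).
nra.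
Qed.

Lemma Cmod_le_re_im (z : C) : Cmod z <= 2 * (Rabs (Re z) + Rabs (Im z)).
Proof.
eapply Rle_trans; [apply Cmod_2Rmax|].
have Hs : sqrt 2 <= 2.
{ rewrite <- (sqrt_square 2) at 2; [|lra]. apply sqrt_le_1_alt. lra. }
have Hm : Rmax (Rabs (fst z)) (Rabs (snd z)) <= Rabs (Re z) + Rabs (Im z).
{ unfold Re, Im. have := Rabs_pos (fst z). have := Rabs_pos (snd z).
  unfold Rmax; destruct Rle_dec; lra. }
have := Rmax_l (Rabs (fst z)) (Rabs (snd z)). have := Rabs_pos (fst z).
have := sqrt_pos 2. nra.
Qed.

Lemma phi_K (phi : R -> R -> C) : schwartzC2 phi -> exists K, 0 <= K /\ forall x y,
  Cmod (phi x y) * ((1 + x * x) * (1 + y * y)) <= K.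
Proof.
intros [HR HI]. destruct (R2_bound _ HR) as [K1 H1]. destruct (R2_bound _ HI) as [K2 H2].
exists (2 * (K1 + K2)). split.
- specialize (H1 0 0); specialize (H2 0 0).
  have := Rabs_pos (Re (phi 0 0)). have := Rabs_pos (Im (phi 0 0)).
  have : 0 <= (1 + 0 * 0) * (1 + 0 * 0) by nra. nra.
- intros x y. specialize (H1 x y); specialize (H2 x y).
  have Hp : 0 <= (1 + x * x) * (1 + y * y) by nra.
  have := Cmod_le_re_im (phi x y). nra.
Qed.
Lemma RInt_gen_noex (f : R -> R) (Fa Fb : (R -> Prop) -> Prop) :
  ~ (exists l, is_RInt_gen f Fa Fb l) -> RInt_gen f Fa Fb = 0.
Proof.
intros Hn. unfold RInt_gen, Hierarchy.iota, lim. simpl. unfold R_complete_lim.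
have E : Lub_Rbar (fun x : R => forall l : R, is_RInt_gen f Fa Fb l ->
     ball (x + 1) {| pos := 1; cond_pos := Rlt_0_1 |} l) = p_infty.
{ destruct (Lub_Rbar_correct (fun x : R => forall l : R, is_RInt_gen f Fa Fb l ->
     ball (x + 1) {| pos := 1; cond_pos := Rlt_0_1 |} l)) as [Hub Hl].
  destruct (Lub_Rbar _) as [r| |] eqn:Hr.
  - exfalso. have := Hub (r + 1). simpl. intros H.
    have : r + 1 <= r. { apply H. intros l Hl'. exfalso; apply Hn; eauto. }
    lra.
  - reflexivity.
  - exfalso. have := Hub 0. simpl. intros H. apply H. intros l Hl'. exfalso; apply Hn; eauto. }
rewrite E. reflexivity.
Qed.

Lemma RInt_gen_bound (f G : R -> R) (la lb : R) :
  (forall t, 0 < t -> Rabs (f t) <= Derive G t) ->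
  (forall t, ex_derive G t) -> (forall t, continuous (Derive G) t) ->
  filterlim G (at_right 0) (locally la) ->
  filterlim G (Rbar_locally p_infty) (locally lb) ->
  0 <= lb - la ->
  RInt_gen f (at_right 0) (Rbar_locally p_infty) <= lb - la.
Proof.
intros Hb HG HGc Ha Hbl Hpos.
destruct (classic (exists l, is_RInt_gen f (at_right 0) (Rbar_locally p_infty) l)) as [[l Hl]|Hn].
- rewrite (is_RInt_gen_unique f l Hl).
  have HD : is_RInt_gen (Derive G) (at_right 0) (Rbar_locally p_infty) (lb - la).
  { apply is_RInt_gen_Derive; auto; apply filter_forall; intros; auto. }
  have Hfp : filter_prod (at_right 0) (Rbar_locally p_infty)
     (fun ab : R * R => 0 < fst ab /\ fst ab < 1 /\ 1 < snd ab).
  { exists (fun u => 0 < u < 1) (fun v => 1 < v).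
    - exists (mkposreal 1 Rlt_0_1). intros u Hu Hu0. split; [exact Hu0|].
      change (Rabs (u - 0) < 1) in Hu. rewrite Rminus_0_r in Hu.
      have := Rle_abs u. lra.
    - exists 1. auto.
    - intros u v Hu Hv; simpl; lra. }
  have := RInt_gen_norm f (Derive G) l (lb - la) _ _ Hl HD.
  intros H. eapply Rle_trans; [apply Rle_abs|]. apply H; [typeclasses eauto|typeclasses eauto| |].
  + eapply filter_imp; [|exact Hfp]. intros [u v]; simpl; lra.
  + eapply filter_imp; [|exact Hfp]. intros [u v]; simpl. intros Huv x Hx.
    apply Hb. lra.
- rewrite RInt_gen_noex; auto.
Qed.
Lemma cont_at_right (G : R -> R) x : continuous G x -> filterlim G (at_right x) (locally (G x)).
Proof.
intros H. eapply filterlim_filter_le_1; [|exact H]. intros P HP.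
unfold at_right, within. eapply filter_imp; [|exact HP]. auto.
Qed.

Lemma ptwise_bound (phi : R -> R -> C) K a t :
  (forall x y, Cmod (phi x y) * ((1 + x * x) * (1 + y * y)) <= K) -> 0 < t ->
  Cmod (phi (a * t) (/ t)) * ((1 + a * a * (t * t)) * (1 + t * t)) <= K * (t * t).
Proof.
intros HK Ht. have H := HK (a * t) (/ t).
have E : Cmod (phi (a * t) (/ t)) * ((1 + a * a * (t * t)) * (1 + t * t)) =
  (Cmod (phi (a * t) (/ t)) * ((1 + a * t * (a * t)) * (1 + / t * / t))) * (t * t)
  by (field; lra).
rewrite E. apply Rmult_le_compat_r; [nra| exact H].
Qed.

Lemma real_caseA (phi : R -> R -> C) K a :
  0 <= K -> (forall x y, Cmod (phi x y) * ((1 + x * x) * (1 + y * y)) <= K) ->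
  1/4 <= a * a -> H_real phi a <= 2 * K.
Proof.
intros HK0 HK Ha. unfold H_real.
set (G := fun t => - (2 * K) / (1 + t * t)).
set (Gd := fun t => 4 * K * t / ((1 + t * t) * (1 + t * t))).
have HDG : forall t, is_derive G t (Gd t).
{ intros t. unfold G, Gd. auto_derive.
  - have := Rle_0_sqr t. unfold Rsqr. lra.
  - field. have := Rle_0_sqr t. unfold Rsqr. lra. }
have EG : Derive G = Gd.
{ apply functional_extensionality; intros t; apply is_derive_unique, HDG. }
replace (2 * K) with (0 - (- (2 * K))) by ring.
apply (RInt_gen_bound _ G).
- intros t Ht. rewrite EG. unfold Gd.
  have Hp := ptwise_bound phi K a t HK Ht.
  have Hc := Cmod_ge_0 (phi (a * t) (/ t)).
  rewrite Rabs_pos_eq; [|apply Rdiv_le_0_compat; lra].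
  set (P := Cmod (phi (a * t) (/ t))) in *.
  have Hd : 0 < 1 + t * t by nra.
  have H2 : P * ((1 + t * t) * (1 + t * t)) <= 4 * K * (t * t).
  { have H3 : 1 + t * t <= 4 * (1 + a * a * (t * t)) by nra.
    have H4 : 0 <= P * (1 + t * t) by nra.
    have := Rmult_le_compat_l _ _ _ H4 H3. nra. }
  replace (P / t) with (P * ((1 + t * t) * (1 + t * t)) / (t * ((1 + t * t) * (1 + t * t)))) by (field; lra).
  replace (4 * K * t / ((1 + t * t) * (1 + t * t))) with (4 * K * (t * t) / (t * ((1 + t * t) * (1 + t * t)))) by (field; lra).
  apply Rmult_le_compat_r; [|exact H2]. left; apply Rinv_0_lt_compat.
  apply Rmult_lt_0_compat; [lra| apply Rmult_lt_0_compat; lra].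
- intros t; eexists; apply HDG.
- intros t. rewrite EG. apply (@ex_derive_continuous R_AbsRing R_NormedModule). unfold Gd. auto_derive.
  have := Rle_0_sqr t. unfold Rsqr. nra.
- replace (- (2 * K)) with (G 0) by (unfold G; field).
  apply cont_at_right, (@ex_derive_continuous R_AbsRing R_NormedModule). eexists; apply HDG.
- apply filterlim_locally. intros eps. exists (Rmax 1 (2 * K / eps)).
  intros t Ht. change (Rabs (G t - 0) < eps).
  have Ht1 := Rle_lt_trans _ _ _ (Rmax_l _ _) Ht.
  have Ht2 := Rle_lt_trans _ _ _ (Rmax_r _ _) Ht.
  have He := cond_pos eps.
  unfold G. rewrite Rminus_0_r Rabs_div; [|nra].
  rewrite Rabs_Ropp (Rabs_pos_eq (2 * K)); [|lra]. rewrite Rabs_pos_eq; [|nra].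
  apply Rlt_div_l; [nra|].
  have : 2 * K < eps * t.
  { apply Rlt_div_l in Ht2; [|exact He]. lra. }
  nra.
- lra.
Qed.
Lemma real_caseB (phi : R -> R -> C) K a :
  0 <= K -> (forall x y, Cmod (phi x y) * ((1 + x * x) * (1 + y * y)) <= K) ->
  a <> 0 -> a * a < 1/4 ->
  H_real phi a <= K / (2 * (1 - a * a)) * (- ln (a * a)).
Proof.
intros HK0 HK Ha0 Ha. unfold H_real.
have Haa : 0 < a * a by (have := Rsqr_pos_lt a Ha0; unfold Rsqr; lra).
set (c := K / (2 * (1 - a * a))).
have Hc : 0 <= c by (unfold c; apply Rdiv_le_0_compat; lra).
set (G := fun t => c * (ln (1 + t * t) - ln (1 + a * a * (t * t)))).
set (Gd := fun t => K * t / ((1 + t * t) * (1 + a * a * (t * t)))).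
have HDG : forall t, is_derive G t (Gd t).
{ intros t. have := Rle_0_sqr t. unfold Rsqr. intros Ht.
  unfold G, Gd, c. auto_derive.
  - split; [nra|split; [nra| auto]].
  - field. repeat split; nra. }
have EG : Derive G = Gd.
{ apply functional_extensionality; intros t; apply is_derive_unique, HDG. }
rewrite -(Rminus_0_r (c * - ln (a * a))).
apply (RInt_gen_bound _ G).
- intros t Ht. rewrite EG. unfold Gd.
  have Hp := ptwise_bound phi K a t HK Ht.
  have Hcm := Cmod_ge_0 (phi (a * t) (/ t)).
  rewrite Rabs_pos_eq; [|apply Rdiv_le_0_compat; lra].
  set (P := Cmod (phi (a * t) (/ t))) in *.
  have Hd : 0 < 1 + t * t by nra.
  have Hd2 : 0 < 1 + a * a * (t * t) by nra.
  set (D := (1 + t * t) * (1 + a * a * (t * t))).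
  have HD : 0 < D by (unfold D; apply Rmult_lt_0_compat; lra).
  have H2 : P * D <= K * (t * t) by (unfold D; nra).
  replace (P / t) with (P * D / (t * D)) by (field; lra).
  replace (K * t / D) with (K * (t * t) / (t * D)) by (field; lra).
  apply Rmult_le_compat_r; [|exact H2]. left; apply Rinv_0_lt_compat.
  apply Rmult_lt_0_compat; lra.
- intros t; eexists; apply HDG.
- intros t. rewrite EG. apply (@ex_derive_continuous R_AbsRing R_NormedModule). unfold Gd. auto_derive.
  have := Rle_0_sqr t. unfold Rsqr. intros. apply Rgt_not_eq, Rmult_lt_0_compat; nra.
- have E0 : G 0 = 0 by (unfold G; rewrite !Rmult_0_l !Rmult_0_r !Rplus_0_r ln_1; ring).
  have := cont_at_right G 0 ((@ex_derive_continuous R_AbsRing R_NormedModule) _ _ (ex_intro _ _ (HDG 0))).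
  rewrite E0. auto.
- set (h := fun t => (1 + t * t) / (1 + a * a * (t * t))).
  have EGh : forall t, G t = c * ln (h t).
  { intros t. unfold G, h. rewrite ln_div; [reflexivity| |]; have := Rle_0_sqr t; unfold Rsqr; nra. }
  eapply filterlim_ext; [intros t; symmetry; apply EGh|].
  replace (c * - ln (a * a)) with (c * ln (/ (a * a))) by (rewrite ln_Rinv; [ring|lra]).
  apply (filterlim_comp _ _ _ h (fun y => c * ln y) _ (locally (/ (a * a)))).
  + apply filterlim_locally. intros eps. have He := cond_pos eps.
    exists (Rmax 1 (/ (eps * (a * a) * (a * a)))).
    intros t Ht.
    have Ht1 := Rle_lt_trans _ _ _ (Rmax_l _ _) Ht.
    have Ht2 := Rle_lt_trans _ _ _ (Rmax_r _ _) Ht.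
    change (Rabs (h t - / (a * a)) < eps).
    have Hd2 : 0 < 1 + a * a * (t * t) by nra.
    replace (h t - / (a * a)) with (- ((1 - a * a) / (a * a * (1 + a * a * (t * t))))) by (unfold h; field; lra).
    rewrite Rabs_Ropp Rabs_pos_eq; [|apply Rdiv_le_0_compat; nra].
    apply Rlt_div_l; [nra|].
    have H1 : 1 < eps * (a * a) * (a * a) * t.
    { have Hq : 0 < eps * (a * a) * (a * a) by (apply Rmult_lt_0_compat; [apply Rmult_lt_0_compat|]; lra).
      apply (Rmult_lt_compat_l (eps * (a * a) * (a * a))) in Ht2; [|exact Hq].
      rewrite Rinv_r in Ht2; lra. }
    have H3 : t <= t * t by nra.
    have H4 : 0 < eps * (a * a) * (a * a) by (apply Rmult_lt_0_compat; [apply Rmult_lt_0_compat|]; lra).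
    have := Rmult_le_compat_l _ _ _ (Rlt_le _ _ H4) H3. nra.
  + have Hpos : 0 < / (a * a) by (apply Rinv_0_lt_compat; lra).
    apply (@ex_derive_continuous R_AbsRing R_NormedModule (fun y => c * ln y)).
    auto_derive. exact Hpos.
- have : ln (a * a) < 0 by (rewrite <- ln_1; apply ln_increasing; lra).
  nra.
Qed.
Lemma real_part : forall phi : R -> R -> C, schwartzC2 phi ->
     exists (n : nat) (A B : nat -> R -> C) (Cst : R),
       (forall i : nat, (i <= n)%nat -> schwartzC (A i) /\ schwartzC (B i)) /\
       0 < Cst /\
       forall a : R, a <> 0 ->
         H_real phi a <=
           sum_f_R0 (fun i => Cmod (A i a)) n
           + Rabs (ln (Rabs a)) * sum_f_R0 (fun i => Cmod (B i a)) n + Cst.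
Proof.
intros phi Hphi. destruct (phi_K phi Hphi) as [K [HK0 HK]].
exists 0%nat, (fun _ x => RtoC (0 * exp (- (x * x)))),
  (fun _ x => RtoC (2 * K * exp (- (x * x)))), (2 * K + 1).
split; [intros i _; split; apply schwartzC_gauss|]. split; [lra|].
intros a Ha. simpl. rewrite !Cmod_R Rmult_0_l Rabs_R0 Rplus_0_l.
have He : 1 - a * a <= exp (- (a * a)) by (have := exp_ineq1_le (- (a * a)); lra).
rewrite (Rabs_pos_eq (2 * K * _)); [|have := exp_pos (- (a * a)); nra].
have Hl0 := Rabs_pos (ln (Rabs a)).
destruct (Rle_lt_dec (1/4) (a * a)) as [H1|H1].
- have := real_caseA phi K a HK0 HK H1.
  have : 0 <= 2 * K * exp (- (a * a)) by (have := exp_pos (- (a * a)); nra).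
  nra.
- have := real_caseB phi K a HK0 HK Ha H1.
  have Hpa : 0 < Rabs a by (apply Rabs_pos_lt; exact Ha).
  have Ea : ln (a * a) = 2 * ln (Rabs a).
  { replace (a * a) with (Rabs a * Rabs a) by (rewrite -Rabs_mult; apply Rabs_pos_eq; nra).
    rewrite ln_mult; lra. }
  have Hla : ln (Rabs a) < 0.
  { rewrite <- ln_1. apply ln_increasing; [exact Hpa|].
    have : Rabs a * Rabs a < 1 by (rewrite -Rabs_mult Rabs_pos_eq; nra). nra. }
  rewrite Ea (Rabs_left (ln (Rabs a))); [|exact Hla].
  set (L := - ln (Rabs a)).
  have HL : 0 <= L by (unfold L; lra).
  intros Hb.
  have Hk : K / (2 * (1 - a * a)) * - (2 * ln (Rabs a)) <= 3/2 * K * L.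
  { replace (K / (2 * (1 - a * a)) * - (2 * ln (Rabs a))) with (K * L / (1 - a * a)) by (unfold L; field; lra).
    apply Rle_div_l; [lra|]. have : 0 <= K * L by nra. nra. }
  have : 3/2 * K <= 2 * K * exp (- (a * a)) by nra.
  nra.
Qed.
Lemma pow_le1 (x : R) n : 0 <= x <= 1 -> x ^ n <= 1.
Proof. intros H. rewrite <- (pow1 n). apply pow_incr. exact H. Qed.

Lemma pow_decr (x : R) m n : 0 <= x <= 1 -> (m <= n)%nat -> x ^ n <= x ^ m.
Proof.
intros H Hmn. replace n with (m + (n - m))%nat by lia. rewrite pow_add.
rewrite -{2}(Rmult_1_r (x ^ m)). apply Rmult_le_compat_l; [apply pow_le; lra| apply pow_le1; exact H].
Qed.

Definition absOK {F : fieldType} (abs : F -> R) : Prop :=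
  (forall x, 0 <= abs x) /\ (forall x, abs x = 0 <-> x = 0%R) /\
  (forall x y, abs (x * y)%R = abs x * abs y) /\
  (forall x y, abs (x + y)%R <= Rmax (abs x) (abs y)).

Lemma absOK_of {F : fieldType} (abs : F -> R) : is_na_local_field abs -> absOK abs.
Proof. intros [H1 [H2 [H3 [H4 _]]]]. repeat split; auto; apply H2. Qed.

Lemma abs_1 {F : fieldType} (abs : F -> R) : absOK abs -> abs 1%R = 1.
Proof.
intros [H0 [HE [HM HU]]].
have H := HM 1%R 1%R. rewrite GRing.mulr1 in H.
have Hn : abs 1%R <> 0. { intros Hz. apply HE in Hz. move: Hz. apply/eqP. exact: GRing.oner_neq0. }
apply (Rmult_eq_reg_l (abs 1%R)); [|exact Hn]. rewrite Rmult_1_r. symmetry. exact H.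
Qed.

Lemma abs_N {F : fieldType} (abs : F -> R) : absOK abs -> forall x, abs (- x)%R = abs x.
Proof.
intros Hok x. have H1 := abs_1 abs Hok. destruct Hok as [H0 [HE [HM HU]]].
have Hm1 : abs (-1)%R = 1.
{ have H := HM (-1)%R (-1)%R. rewrite GRing.mulrNN GRing.mulr1 H1 in H.
  have := H0 (-1)%R. nra. }
rewrite -GRing.mulN1r HM Hm1. ring.
Qed.

Lemma abs_sym {F : fieldType} (abs : F -> R) : absOK abs -> forall x y, abs (x - y)%R = abs (y - x)%R.
Proof. intros Hok x y. rewrite -(abs_N abs Hok) GRing.opprB. reflexivity. Qed.

Lemma abs_V {F : fieldType} (abs : F -> R) : absOK abs -> forall x, x <> 0%R -> abs (x^-1)%R = / abs x.
Proof.
intros Hok x Hx. have H1 := abs_1 abs Hok. destruct Hok as [H0 [HE [HM HU]]].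
have Hax : abs x <> 0 by (intros Hz; apply Hx, HE, Hz).
have H := HM x (x^-1)%R. rewrite GRing.mulfV in H; [|apply/eqP; exact Hx].
rewrite H1 in H. apply (Rmult_eq_reg_l (abs x)); [|exact Hax].
rewrite -H Rinv_r; [reflexivity|exact Hax].
Qed.

Lemma abs_X {F : fieldType} (abs : F -> R) : absOK abs -> forall x n, abs (x ^+ n)%R = abs x ^ n.
Proof.
intros Hok x n. have H1 := abs_1 abs Hok. destruct Hok as [H0 [HE [HM HU]]].
induction n as [|n IH].
- rewrite GRing.expr0. simpl. exact H1.
- rewrite GRing.exprS HM IH. reflexivity.
Qed.

Lemma abs_ultra3 {F : fieldType} (abs : F -> R) : absOK abs -> forall x y z,
  abs (x - z)%R <= Rmax (abs (x - y)%R) (abs (y - z)%R).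
Proof.
intros Hok x y z. destruct Hok as [H0 [HE [HM HU]]].
have E : (x - z = (x - y) + (y - z))%R.
{ rewrite GRing.addrA GRing.subrK. reflexivity. }
rewrite E. apply HU.
Qed.

Lemma abs_disc {F : fieldType} (abs : F -> R) (w : F) : absOK abs -> is_uniformizer abs w ->
  forall z, abs z < 1 -> abs z <= abs w.
Proof.
intros Hok [[Hw0 Hw1] Hw] z Hz. destruct Hok as [H0 [HE [HM HU]]].
destruct (classic (z = 0%R)) as [->|Hnz].
- have : abs 0%R = 0 by apply HE. lra.
- destruct (Hw z Hnz) as [k Hk]. rewrite Hk in Hz |- *.
  destruct k as [|p|p]; simpl in *.
  + lra.
  + have Hp := Pos2Nat.is_pos p. destruct (Pos.to_nat p) as [|n] eqn:E; [lia|].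
    simpl. have : abs w ^ n <= 1 by (apply pow_le1; lra) .
    have := pow_le (abs w) n. nra.
  + exfalso. have Hp : 0 < abs w ^ Pos.to_nat p by (apply pow_lt; lra).
    have Hp1 : abs w ^ Pos.to_nat p <= 1 by (apply pow_le1; lra).
    have : 1 <= / abs w ^ Pos.to_nat p.
    { rewrite <- Rinv_1. apply Rinv_le_contravar; lra. }
    lra.
Qed.
Lemma cover1 {F : fieldType} (abs : F -> R) w (s : list F) :
  absOK abs -> is_uniformizer abs w ->
  (forall x, abs x <= 1 -> exists r, List.In r s /\ Defs.dist abs x r < 1) ->
  forall c v x, v <> 0%R -> abs (x - c)%R <= abs v ->
  exists r, List.In r s /\ abs (x - (c + v * r))%R <= abs (v * w)%R.
Proof.
intros Hok Hw Hs c v x Hv Hx.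
have HV := abs_V abs Hok v Hv.
have Hdisc := abs_disc abs w Hok Hw.
destruct Hok as [H0 [HE [HM HU]]].
have Hav : 0 < abs v. { have := H0 v. intros H. destruct H as [H|H]; [exact H|].
  exfalso; apply Hv, HE; auto. }
set u := ((x - c) * v^-1)%R.
have Hu : abs u <= 1.
{ unfold u. rewrite HM HV. apply (Rmult_le_reg_l (abs v)); [exact Hav|].
  rewrite -Rmult_assoc (Rmult_comm (abs v)) Rmult_assoc Rinv_r; lra. }
destruct (Hs u Hu) as [r [Hr Hd]]. exists r. split; [exact Hr|].
unfold Defs.dist in Hd. have Hd' := Hdisc _ Hd.
have E : (x - (c + v * r) = v * (u - r))%R.
{ unfold u. rewrite GRing.mulrBr GRing.mulrCA GRing.mulfV; [|apply/eqP; exact Hv].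
  rewrite GRing.mulr1 GRing.opprD GRing.addrA. reflexivity. }
rewrite E !HM. apply Rmult_le_compat_l; [lra| exact Hd'].
Qed.

Definition bndb {F : fieldType} (abs : F -> R) (phi : F -> F -> C) (c1 c2 v : F) : Prop :=
  exists M, forall x y, abs (x - c1)%R <= abs v -> abs (y - c2)%R <= abs v -> Cmod (phi x y) <= M.

Lemma list_max {A : Type} (L : list A) (Q : A -> R -> Prop) :
  (forall a M M', M <= M' -> Q a M -> Q a M') ->
  (forall a, List.In a L -> exists M, Q a M) -> exists M, forall a, List.In a L -> Q a M.
Proof.
intros Hmono. induction L as [|a L IH]; intros Hall.
- exists 0. intros a [].
- destruct (Hall a (or_introl (erefl a))) as [Ma Ha].
  destruct IH as [ML HL]. { intros b Hb. apply Hall. right; exact Hb. }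
  exists (Rmax Ma ML). intros b [<-|Hb].
  + eapply Hmono; [apply Rmax_l| exact Ha].
  + eapply Hmono; [apply Rmax_r| apply HL; exact Hb].
Qed.

Lemma split_unbnd {F : fieldType} (abs : F -> R) w (s : list F) phi :
  absOK abs -> is_uniformizer abs w ->
  (forall r, List.In r s -> abs r <= 1) ->
  (forall x, abs x <= 1 -> exists r, List.In r s /\ Defs.dist abs x r < 1) ->
  forall c1 c2 v, v <> 0%R -> ~ bndb abs phi c1 c2 v ->
  exists c1' c2', ~ bndb abs phi c1' c2' (v * w)%R /\
     abs (c1' - c1)%R <= abs v /\ abs (c2' - c2)%R <= abs v.
Proof.
intros Hok Hw Hs1 Hs c1 c2 v Hv Hnb.
apply NNPP. intros Hn. apply Hnb.
have Hok' := Hok. destruct Hok' as [H0 [HE [HM HU]]].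
have Hclose : forall c r, List.In r s -> abs (c + v * r - c)%R <= abs v.
{ intros c r Hr. rewrite GRing.addrC GRing.addKr HM.
  have := Hs1 r Hr. have := H0 v. have := H0 r. nra. }
set Q := fun (p : F * F) M => forall x y, abs (x - (c1 + v * p.1))%R <= abs (v * w)%R ->
   abs (y - (c2 + v * p.2))%R <= abs (v * w)%R -> Cmod (phi x y) <= M.
destruct (list_max (List.list_prod s s) Q) as [M HMQ].
- intros p M M' HMM' HQ x y Hx Hy. eapply Rle_trans; [apply HQ; eauto| exact HMM'].
- intros [r1 r2] Hp. apply List.in_prod_iff in Hp. destruct Hp as [Hr1 Hr2].
  destruct (classic (bndb abs phi (c1 + v * r1)%R (c2 + v * r2)%R (v * w)%R)) as [Hb|Hb].
  + destruct Hb as [M HB]. exists M. intros x y Hx Hy. apply HB; auto.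
  + exfalso. apply Hn. exists (c1 + v * r1)%R, (c2 + v * r2)%R. split; [exact Hb|].
    split; apply Hclose; auto.
- exists M. intros x y Hx Hy.
  destruct (cover1 abs w s Hok Hw Hs c1 v x Hv Hx) as [r1 [Hr1 Hx1]].
  destruct (cover1 abs w s Hok Hw Hs c2 v y Hv Hy) as [r2 [Hr2 Hy2]].
  apply (HMQ (r1, r2)); [apply List.in_prod; auto| exact Hx1| exact Hy2].
Qed.

Lemma seq_conv {F : fieldType} (abs : F -> R) :
  absOK abs ->
  (forall u : nat -> F,
     (forall eps, 0 < eps -> exists N : nat, forall m n : nat,
        (N <= m)%nat -> (N <= n)%nat -> Defs.dist abs (u m) (u n) < eps) ->
     exists l : F, forall eps, 0 < eps -> exists N : nat, forall n : nat,
        (N <= n)%nat -> Defs.dist abs (u n) l < eps) ->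
  forall (u : nat -> F) B q, 0 <= B -> 0 < q < 1 ->
  (forall n, abs (u n.+1 - u n)%R <= B * q ^ n) ->
  exists l, forall eps, 0 < eps -> exists N : nat, forall n : nat,
     (N <= n)%nat -> abs (u n - l)%R < eps.
Proof.
intros Hok Hcomp u B q HB Hq Hu.
have Hsym := abs_sym abs Hok.
have Hest : forall n k, abs (u (n + k)%N - u n)%R <= B * q ^ n.
{ intros n k. induction k as [|k IH].
  - rewrite addn0 GRing.subrr. destruct Hok as [H0 [HE [HM HU]]].
    have -> : abs 0%R = 0 by apply HE. have := pow_le q n. nra.
  - eapply Rle_trans; [apply (abs_ultra3 abs Hok _ (u (n + k)%N))|].
    apply Rmax_lub; [|exact IH]. rewrite addnS.
    eapply Rle_trans; [apply Hu|]. apply Rmult_le_compat_l; [exact HB|].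
    apply pow_decr; [lra| apply leq_addr]. }
apply (Hcomp u). intros eps Heps.
have Hq1 : Rabs q < 1 by (rewrite Rabs_pos_eq; lra).
have Hep : 0 < eps / (B + 1) by (apply Rdiv_lt_0_compat; lra).
destruct (pow_lt_1_zero q Hq1 _ Hep) as [N HN].
exists N. intros m n Hm Hn. unfold Defs.dist.
have HqN : B * q ^ N < eps.
{ have := HN N (le_n N). rewrite Rabs_pos_eq; [|apply pow_le; lra].
  intros H. apply Rlt_div_r in H; [|lra]. have := pow_le q N. nra. }
case: (leqP n m) => Hnm.
- have E : m = (n + (m - n))%N by lia. rewrite E.
  eapply Rle_lt_trans; [apply Hest|]. eapply Rle_lt_trans; [|exact HqN].
  apply Rmult_le_compat_l; [exact HB| apply pow_decr; [lra| exact Hn]].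
- rewrite Hsym. have E : n = (m + (n - m))%N by lia. rewrite E.
  eapply Rle_lt_trans; [apply Hest|]. eapply Rle_lt_trans; [|exact HqN].
  apply Rmult_le_compat_l; [exact HB| apply pow_decr; [lra| exact Hm]].
Qed.
Lemma bnd_all {F : fieldType} (abs : F -> R) w (s : list F) (phi : F -> F -> C) :
  absOK abs -> is_uniformizer abs w ->
  (forall r, List.In r s -> abs r <= 1) ->
  (forall x, abs x <= 1 -> exists r, List.In r s /\ Defs.dist abs x r < 1) ->
  (forall u : nat -> F,
     (forall eps, 0 < eps -> exists N : nat, forall m n : nat,
        (N <= m)%nat -> (N <= n)%nat -> Defs.dist abs (u m) (u n) < eps) ->
     exists l : F, forall eps, 0 < eps -> exists N : nat, forall n : nat,
        (N <= n)%nat -> Defs.dist abs (u n) l < eps) ->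
  (forall x1 x2, exists r, 0 < r /\ forall y1 y2,
      Rmax (Defs.dist abs x1 y1) (Defs.dist abs x2 y2) < r -> phi y1 y2 = phi x1 x2) ->
  forall c1 c2 v, v <> 0%R -> bndb abs phi c1 c2 v.
Proof.
intros Hok Hw Hs1 Hs Hcomp Hlc c1 c2 v Hv.
apply NNPP. intros Hnb.
have Hsym := abs_sym abs Hok.
have HX := abs_X abs Hok.
have Hok' := Hok. destruct Hok' as [H0 [HE [HM HU]]].
have Hw' := Hw. destruct Hw' as [[Hw0 Hw1] _].
have Hwn : w <> 0%R. { intros Hz. rewrite Hz in Hw0. have : abs 0%R = 0 by apply HE. lra. }
set vj := fun j => (v * w ^+ j)%R.
have Hvj : forall j, vj j <> 0%R.
{ intros j. apply/eqP. unfold vj. apply GRing.mulf_neq0; [apply/eqP; exact Hv|].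
  apply GRing.expf_neq0. apply/eqP; exact Hwn. }
have Habsvj : forall j, abs (vj j) = abs v * abs w ^ j.
{ intros j. unfold vj. rewrite HM HX. reflexivity. }
have Hvjs : forall j, vj j.+1 = (vj j * w)%R.
{ intros j. unfold vj. rewrite GRing.exprSr GRing.mulrA. reflexivity. }
have step : forall j (p : F * F), exists p' : F * F, ~ bndb abs phi p.1 p.2 (vj j) ->
   ~ bndb abs phi p'.1 p'.2 (vj j.+1) /\ abs (p'.1 - p.1)%R <= abs (vj j) /\
   abs (p'.2 - p.2)%R <= abs (vj j).
{ intros j p. destruct (classic (bndb abs phi p.1 p.2 (vj j))) as [Hb|Hb].
  - exists p. intros H; contradiction.
  - destruct (split_unbnd abs w s phi Hok Hw Hs1 Hs p.1 p.2 (vj j) (Hvj j) Hb)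
      as [c1' [c2' [H1 [H2 H3]]]].
    exists (c1', c2'). intros _. rewrite Hvjs. auto. }
set g := fun j p => proj1_sig (constructive_indefinite_description _ (step j p)).
have Hg : forall j p, ~ bndb abs phi p.1 p.2 (vj j) ->
   ~ bndb abs phi (g j p).1 (g j p).2 (vj j.+1) /\ abs ((g j p).1 - p.1)%R <= abs (vj j) /\
   abs ((g j p).2 - p.2)%R <= abs (vj j).
{ intros j p. exact (proj2_sig (constructive_indefinite_description _ (step j p))). }
set cs := fun n => nat_rect (fun _ => (F * F)%type) (c1, c2) (fun j p => g j p) n.
have Hcs : forall n, cs n.+1 = g n (cs n) by (intros n; reflexivity).
have Hinv : forall n, ~ bndb abs phi (cs n).1 (cs n).2 (vj n).
{ induction n as [|n IH].
  - simpl. unfold vj. rewrite GRing.expr0 GRing.mulr1. exact Hnb.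
  - rewrite Hcs. apply Hg, IH. }
have Hcl : forall n, abs ((cs n.+1).1 - (cs n).1)%R <= abs v * abs w ^ n /\
                     abs ((cs n.+1).2 - (cs n).2)%R <= abs v * abs w ^ n.
{ intros n. rewrite -Habsvj Hcs. have := Hg n (cs n) (Hinv n). tauto. }
have Hq : 0 < abs w < 1 by lra.
destruct (seq_conv abs Hok Hcomp (fun n => (cs n).1) (abs v) (abs w) (H0 v) Hq
   (fun n => proj1 (Hcl n))) as [l1 Hl1].
destruct (seq_conv abs Hok Hcomp (fun n => (cs n).2) (abs v) (abs w) (H0 v) Hq
   (fun n => proj2 (Hcl n))) as [l2 Hl2].
destruct (Hlc l1 l2) as [r [Hr Hc]].
destruct (Hl1 r Hr) as [N1 HN1]. destruct (Hl2 r Hr) as [N2 HN2].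
have Hq1 : Rabs (abs w) < 1 by (rewrite Rabs_pos_eq; lra).
have Hep : 0 < r / (abs v + 1) by (apply Rdiv_lt_0_compat; have := H0 v; lra).
destruct (pow_lt_1_zero (abs w) Hq1 _ Hep) as [N3 HN3].
set n := (N1 + N2 + N3)%N.
apply (Hinv n). exists (Cmod (phi l1 l2)). intros x y Hx Hy.
have Hvn : abs v * abs w ^ n < r.
{ have := HN3 n ltac:(unfold n; lia). rewrite Rabs_pos_eq; [|apply pow_le; lra].
  intros H. apply Rlt_div_r in H; [|have := H0 v; lra]. have := pow_le (abs w) n.
  have := H0 v. nra. }
rewrite Habsvj in Hx, Hy.
rewrite (Hc x y); [lra|].
apply Rmax_lub_lt; unfold Defs.dist.
- eapply Rle_lt_trans; [apply (abs_ultra3 abs Hok _ (cs n).1)|].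
  apply Rmax_lub_lt.
  + rewrite Hsym. apply HN1. unfold n; lia.
  + rewrite Hsym. lra.
- eapply Rle_lt_trans; [apply (abs_ultra3 abs Hok _ (cs n).2)|].
  apply Rmax_lub_lt.
  + rewrite Hsym. apply HN2. unfold n; lia.
  + rewrite Hsym. lra.
Qed.
Lemma series_fin (u : nat -> R) N M : (forall n, (N <= n)%nat -> u n = 0) ->
  (forall n, 0 <= u n <= M) -> Series u <= INR N.+1 * M.
Proof.
intros Hz Hb.
have Hk : forall k, sum_n u (N + k)%N = sum_n u N.
{ induction k as [|k IH]; [rewrite addn0; reflexivity|].
  rewrite addnS sum_Sn IH Hz. rewrite plus_zero_r. reflexivity. lia. }
have Hs : is_series u (sum_n u N).
{ unfold is_series. eapply filterlim_ext_loc; [|apply filterlim_const].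
  exists N. intros n Hn. have E : n = (N + (n - N))%N by lia. rewrite E Hk. reflexivity. }
rewrite (is_series_unique _ _ Hs).
clear Hz Hk Hs. induction N as [|N IH].
- rewrite sum_O. simpl. have := Hb 0%nat. lra.
- rewrite sum_Sn S_INR. change (sum_n u N + u N.+1 <= (INR N.+1 + 1) * M).
  have := Hb N.+1. lra.
Qed.

Lemma phi_bounded {F : fieldType} (abs : F -> R) w (phi : F -> F -> C) :
  is_na_local_field abs -> is_uniformizer abs w -> schwartzF2 abs phi ->
  exists M Rb, 0 <= M /\ 1 <= Rb /\ (forall x y, Cmod (phi x y) <= M) /\
    (forall x1 x2, Rb < Rmax (abs x1) (abs x2) -> phi x1 x2 = 0).
Proof.
intros Hl Hw [Hlc [Rb Hsupp]].
have Hok := absOK_of abs Hl.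
destruct Hl as [_ [_ [_ [_ [_ [Hcomp [s [Hs1 Hs]]]]]]]].
have HX := abs_X abs Hok. have HV := abs_V abs Hok.
have Hok' := Hok. destruct Hok' as [H0 [HE [HM HU]]].
have Hw' := Hw. destruct Hw' as [[Hw0 Hw1] _].
have Hwn : w <> 0%R. { intros Hz. rewrite Hz in Hw0. have : abs 0%R = 0 by apply HE. lra. }
set R1 := Rmax Rb 1.
have HR1 : 1 <= R1 by apply Rmax_r.
have Hq1 : Rabs (abs w) < 1 by (rewrite Rabs_pos_eq; lra).
destruct (pow_lt_1_zero (abs w) Hq1 (/ R1) ltac:(apply Rinv_0_lt_compat; lra)) as [N HN].
have HwN : (w ^+ N)%R <> 0%R.
{ apply/eqP. apply GRing.expf_neq0. apply/eqP; exact Hwn. }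
set v0 := ((w ^+ N)^-1)%R.
have Hv0 : v0 <> 0%R. { unfold v0. apply/eqP. rewrite GRing.invr_eq0. apply/eqP; exact HwN. }
have Hav0 : R1 < abs v0.
{ unfold v0. rewrite HV; [|exact HwN]. rewrite HX.
  have H := HN N (le_n N). rewrite Rabs_pos_eq in H; [|apply pow_le; lra].
  have Hp : 0 < abs w ^ N by (apply pow_lt; lra).
  rewrite <- (Rinv_inv R1). apply Rinv_lt_contravar; [|exact H].
  apply Rmult_lt_0_compat; [exact Hp| apply Rinv_0_lt_compat; lra]. }
destruct (bnd_all abs w s phi Hok Hw Hs1 Hs Hcomp Hlc 0%R 0%R v0 Hv0) as [M HMb].
exists (Rmax M 0), R1. split; [apply Rmax_r|]. split; [exact HR1|]. split.
- intros x y. destruct (Rle_lt_dec (Rmax (abs x) (abs y)) R1) as [Hin|Hout].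
  + eapply Rle_trans; [|apply Rmax_l]. apply HMb.
    * rewrite GRing.subr0. have := Rmax_l (abs x) (abs y). lra.
    * rewrite GRing.subr0. have := Rmax_r (abs x) (abs y). lra.
  + rewrite Hsupp; [|have := Rmax_l Rb 1; fold R1; lra]. rewrite Cmod_R Rabs_R0. apply Rmax_r.
- intros x1 x2 H. apply Hsupp. have := Rmax_l Rb 1. fold R1. lra.
Qed.
Lemma schwartzF_ind {F : fieldType} (abs : F -> R) (Rb c : R) :
  absOK abs -> 0 < Rb ->
  schwartzF abs (fun a => RtoC (if Rle_dec (abs a) Rb then c else 0)).
Proof.
intros Hok HR0. have Hsym := abs_sym abs Hok.
have Hok' := Hok. destruct Hok' as [H0 [HE [HM HU]]].
split.
- intros x. destruct (Rle_dec (abs x) Rb) as [Hx|Hx].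
  + exists Rb. split; [exact HR0|]. intros y Hy. unfold Defs.dist in Hy.
    have {}Hy : abs (x - y)%R < Rb := Hy.
    have Hyle : abs y <= Rb.
    { have E : y = ((y - x) + x)%R by rewrite GRing.subrK.
      rewrite E. clear E. eapply Rle_trans; [apply HU|]. rewrite -Hsym.
      unfold Rmax; destruct Rle_dec; [exact Hx| left; exact Hy]. }
    destruct (Rle_dec (abs y) Rb); [reflexivity| contradiction].
  + exists (abs x). split; [have := H0 x; lra|]. intros y Hy. unfold Defs.dist in Hy.
    have {}Hy : abs (x - y)%R < abs x := Hy.
    have Hygt : abs x <= abs y.
    { have E : x = ((x - y) + y)%R by rewrite GRing.subrK.
      have := HU (x - y)%R y. rewrite -E. clear E.
      unfold Rmax; destruct Rle_dec; lra. }
    destruct (Rle_dec (abs y) Rb); [lra| reflexivity].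
- exists Rb. intros x Hx. destruct (Rle_dec (abs x) Rb); [lra| reflexivity].
Qed.

Lemma schwartzF_zero {F : fieldType} (abs : F -> R) : schwartzF abs (fun _ => RtoC 0).
Proof. split; [intros x; exists 1; split; [lra| reflexivity]| exists 0; reflexivity]. Qed.

Lemma na_part : forall (F : fieldType) (abs : F -> R),
     is_na_local_field abs -> char_zero F ->
     forall w : F, is_uniformizer abs w ->
     forall phi : F -> F -> C, schwartzF2 abs phi ->
     exists (n : nat) (A B : nat -> F -> C) (Cst : R),
       (forall i : nat, (i <= n)%nat -> schwartzF abs (A i) /\ schwartzF abs (B i)) /\
       0 < Cst /\
       forall a : F, a <> (@GRing.zero F) ->
         H_na w phi a <=
           sum_f_R0 (fun i => Cmod (A i a)) n
           + Rabs (ln (abs a)) * sum_f_R0 (fun i => Cmod (B i a)) n + Cst.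
Proof.
intros F abs Hl _ w Hw phi Hphi.
destruct (phi_bounded abs w phi Hl Hw Hphi) as [M [Rb [HM0 [HR0 [HMb Hsupp]]]]].
have Hok := absOK_of abs Hl.
have HX := abs_X abs Hok. have HV := abs_V abs Hok.
have Hok' := Hok. destruct Hok' as [H0 [HE [HM HU]]].
have Hw' := Hw. destruct Hw' as [[Hw0 Hw1] _].
have Hwn : w <> 0%R. { intros Hz. rewrite Hz in Hw0. have : abs 0%R = 0 by apply HE. lra. }
have HwN : forall n, (w ^+ n)%R <> 0%R.
{ intros n. apply/eqP. apply GRing.expf_neq0. apply/eqP; exact Hwn. }
set q := abs w in Hw0 Hw1 *. set Lq := - ln q.
have Hlnq : ln q < 0 by (rewrite <- ln_1; apply ln_increasing; lra).
have HLq : 0 < Lq by (unfold Lq; lra).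
have Hq1 : Rabs q < 1 by (rewrite Rabs_pos_eq; lra).
destruct (pow_lt_1_zero q Hq1 (/ Rb) ltac:(apply Rinv_0_lt_compat; lra)) as [N1 HN1].
have HlnR0 : 0 <= ln Rb by (rewrite <- ln_1; apply ln_le; lra).
exists 0%nat, (fun _ _ => RtoC 0), (fun _ a => RtoC (if Rle_dec (abs a) Rb then M / Lq else 0)),
  (INR N1.+1 * M + 2 * M + M * ln Rb / Lq + 1).
split; [intros i _; split; [apply schwartzF_zero| apply schwartzF_ind; [exact Hok| lra]]|].
have HMLq : 0 <= M * ln Rb / Lq by (apply Rdiv_le_0_compat; [nra| lra]).
have HN1M : 0 <= INR N1.+1 * M by (have := pos_INR N1.+1; nra).
split; [lra|].
intros a Ha. cbn [sum_f_R0]. rewrite !Cmod_R Rabs_R0 Rplus_0_l.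
have Hapos : 0 < abs a. { have := H0 a. intros [H|H]; [exact H|]. exfalso; apply Ha, HE; auto. }
unfold H_na.
have HS1 : Series (fun n => Cmod (phi (a * w ^+ n)%R (w ^+ n)^-1%R)) <= INR N1.+1 * M.
{ apply series_fin.
  - intros n Hn. rewrite Hsupp; [apply Cmod_0|].
    eapply Rlt_le_trans; [|apply Rmax_r]. rewrite HV; [|apply HwN]. rewrite HX. fold q.
    have H := HN1 n ltac:(lia). rewrite Rabs_pos_eq in H; [|apply pow_le; lra].
    rewrite <- (Rinv_inv Rb). apply Rinv_lt_contravar; [|exact H].
    apply Rmult_lt_0_compat; [apply pow_lt; lra| apply Rinv_0_lt_compat; lra].
  - intros n. split; [apply Cmod_ge_0| apply HMb]. }
have Habs2 : forall n, abs (a * (w ^+ n.+1)^-1)%R = abs a / q ^ n.+1.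
{ intros n. rewrite HM HV; [|apply HwN]. rewrite HX. reflexivity. }
have Hqn : forall n, 0 < q ^ n by (intros n; apply pow_lt; lra).
destruct (Rle_dec (abs a) Rb) as [HaR|HaR].
- set X := (ln Rb - ln (abs a)) / Lq.
  have HX0 : 0 <= X by (unfold X; apply Rdiv_le_0_compat; [|lra];
     have := ln_le _ _ Hapos HaR; lra).
  destruct (archimed X) as [Hup1 Hup2].
  set z := up X.
  have Hz0 : Z.le 0 z by (apply le_IZR; fold z in Hup1; lra).
  set N := Z.to_nat z.
  have HINR : INR N = IZR z by (unfold N; rewrite INR_IZR_INZ Znat.Z2Nat.id; [reflexivity| exact Hz0]).
  have HS2 : Series (fun n => Cmod (phi (a * (w ^+ n.+1)^-1)%R (w ^+ n.+1)%R)) <= INR N.+1 * M.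
  { apply series_fin.
    - intros n Hn. rewrite Hsupp; [apply Cmod_0|].
      eapply Rlt_le_trans; [|apply Rmax_l]. rewrite Habs2.
      have Hn' : X < INR n.+1.
      { rewrite S_INR. have := le_INR N n ltac:(lia). fold z in Hup1. lra. }
      have Eq : q ^ n.+1 = exp (INR n.+1 * ln q).
      { rewrite <- Rpower_pow; [reflexivity| lra]. }
      rewrite Eq -(exp_ln (abs a)); [|exact Hapos]. rewrite -(exp_ln Rb); [|lra].
      unfold Rdiv. rewrite -exp_Ropp -exp_plus. apply exp_increasing.
      unfold X in Hn'. apply Rlt_div_l in Hn'; [|exact HLq]. unfold Lq in Hn'. lra.
    - intros n. split; [apply Cmod_ge_0| apply HMb]. }
  rewrite S_INR HINR in HS2. fold z in Hup2.
  have HXM : X * M <= M * ln Rb / Lq + Rabs (ln (abs a)) * (M / Lq).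
  { unfold X. have := Rle_abs (- ln (abs a)). rewrite Rabs_Ropp.
    intros Hab. unfold Rdiv.
    have Hi : 0 < / Lq by (apply Rinv_0_lt_compat; lra).
    have : (ln Rb - ln (abs a)) * / Lq * M = M * ln Rb * / Lq + (- ln (abs a)) * (M * / Lq) by ring.
    intros ->. apply Rplus_le_compat_l. apply Rmult_le_compat_r; [|exact Hab].
    apply Rmult_le_pos; lra. }
  rewrite (Rabs_pos_eq (M / Lq)); [|apply Rdiv_le_0_compat; lra].
  have : (IZR z + 1) * M <= (X + 2) * M by (apply Rmult_le_compat_r; lra).
  lra.
- have HS2 : Series (fun n => Cmod (phi (a * (w ^+ n.+1)^-1)%R (w ^+ n.+1)%R)) <= INR 1 * M.
  { apply series_fin.
    - intros n Hn. rewrite Hsupp; [apply Cmod_0|].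
      eapply Rlt_le_trans; [|apply Rmax_l]. rewrite Habs2.
      have Hp1 : q ^ n.+1 <= 1 by (apply pow_le1; lra).
      apply Rnot_le_lt in HaR.
      apply Rlt_le_trans with (abs a); [exact HaR|].
      unfold Rdiv. rewrite -{1}(Rmult_1_r (abs a)). apply Rmult_le_compat_l; [lra|].
      rewrite <- Rinv_1 at 1. apply Rinv_le_contravar; [apply Hqn| exact Hp1].
    - intros n. split; [apply Cmod_ge_0| apply HMb]. }
  simpl in HS2. rewrite Rabs_R0 Rmult_0_r. have := Rabs_pos (ln (abs a)). lra.
Qed.

Theorem lemma4p3 :
  (* F = R *)
  (forall phi : R -> R -> C, schwartzC2 phi ->
     exists (n : nat) (A B : nat -> R -> C) (Cst : R),
       (forall i : nat, (i <= n)%nat -> schwartzC (A i) /\ schwartzC (B i)) /\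
       0 < Cst /\
       forall a : R, a <> 0 ->
         H_real phi a <=
           sum_f_R0 (fun i => Cmod (A i a)) n
           + Rabs (ln (Rabs a)) * sum_f_R0 (fun i => Cmod (B i a)) n + Cst)
  /\
  (* F non-archimedean local field of characteristic zero *)
  (forall (F : fieldType) (abs : F -> R),
     is_na_local_field abs -> char_zero F ->
     forall w : F, is_uniformizer abs w ->
     forall phi : F -> F -> C, schwartzF2 abs phi ->
     exists (n : nat) (A B : nat -> F -> C) (Cst : R),
       (forall i : nat, (i <= n)%nat -> schwartzF abs (A i) /\ schwartzF abs (B i)) /\
       0 < Cst /\
       forall a : F, a <> (@GRing.zero F) ->
         H_na w phi a <=
           sum_f_R0 (fun i => Cmod (A i a)) n
           + Rabs (ln (abs a)) * sum_f_R0 (fun i => Cmod (B i a)) n + Cst).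
Proof.
split; [exact real_part | exact na_part].
Qed.
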